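(* For every integer $n\geq 0$, $$C_3(n+1)=\sum_{i=0}^{n}\binom{n}{i}E_3(i),$$ with the convention $E_3(0)=1$.
   Context: The arc diagram of a set partition $P$ of $[n]=\{1,\ldots,n\}$: place nodes $1,\ldots,n$ on a line and draw an arc $(i,j)$, $i<j$, whenever $i$ and $j$ lie in the same block of $P$ and no element $l$ of that block satisfies $i<l<j$. A $3$-crossing of $P$ is a triple of arcs $(i_1,j_1),(i_2,j_2),(i_3,j_3)$ with $i_1<i_2<i_3<j_1<j_2<j_3$; an enhanced $3$-crossing is such a triple with $i_1<i_2<i_3\leq j_1<j_2<j_3$. $C_3(n)$ (resp. $E_3(n)$) is the number of partitions of $[n]$ with no $3$-crossing (resp. no enhanced $3$-crossing). *)

(* Defs.v *)
(* Elements of [n] = {1..n} are represented by 'I_n = {0..n-1}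
   (order-preserving shift by one, so arcs/crossings are unchanged). *)
From mathcomp Require Import all_boot.
Set Implicit Arguments. Unset Strict Implicit. Unset Printing Implicit Defensive.

Definition is_set_partition (n : nat) (P : {set {set 'I_n}}) : bool :=
  partition P [set: 'I_n].

Definition arc (n : nat) (P : {set {set 'I_n}}) (i j : 'I_n) : bool :=
  (i < j) &&
  [exists B in P, [&& i \in B, j \in B &
     [forall l in B, ~~ ((i < l) && (l < j))]]].

Definition has_3crossing (n : nat) (P : {set {set 'I_n}}) : bool :=
  [exists i1 : 'I_n, exists i2 : 'I_n, exists i3 : 'I_n,
   exists j1 : 'I_n, exists j2 : 'I_n, exists j3 : 'I_n,
   [&& arc P i1 j1, arc P i2 j2, arc P i3 j3,
       i1 < i2, i2 < i3, i3 < j1, j1 < j2 & j2 < j3]].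

Definition has_enh_3crossing (n : nat) (P : {set {set 'I_n}}) : bool :=
  [exists i1 : 'I_n, exists i2 : 'I_n, exists i3 : 'I_n,
   exists j1 : 'I_n, exists j2 : 'I_n, exists j3 : 'I_n,
   [&& arc P i1 j1, arc P i2 j2, arc P i3 j3,
       i1 < i2, i2 < i3, i3 <= j1, j1 < j2 & j2 < j3]].

Definition C3 (n : nat) : nat :=
  #|[set P : {set {set 'I_n}} | is_set_partition P && ~~ has_3crossing P]|.

Definition E3 (n : nat) : nat :=
  #|[set P : {set {set 'I_n}} | is_set_partition P && ~~ has_enh_3crossing P]|.

(* Main.v *)
Require Import Defs.
From mathcomp Require Import all_boot.
From mathcomp Require Import zify.
Set Implicit Arguments. Unset Strict Implicit. Unset Printing Implicit Defensive.

Definition ordc (e : bool) (i1 i2 i3 j1 j2 j3 : nat) : bool :=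
  [&& i1 < i2, i2 < i3, (if e then i3 <= j1 else i3 < j1), j1 < j2 & j2 < j3].

Section Gen.
Variable n : nat.
Notation T := ('I_n * 'I_n)%type.

Definition crossR (A : {set T}) (e : bool) : bool :=
  [exists i1 : 'I_n, exists i2 : 'I_n, exists i3 : 'I_n,
   exists j1 : 'I_n, exists j2 : 'I_n, exists j3 : 'I_n,
   [&& (i1, j1) \in A, (i2, j2) \in A, (i3, j3) \in A &
       ordc e i1 i2 i3 j1 j2 j3]].

Lemma crossRP (A : {set T}) e : reflect (exists i1 i2 i3 j1 j2 j3 : 'I_n,
   [/\ (i1, j1) \in A, (i2, j2) \in A, (i3, j3) \in A &
       ordc e i1 i2 i3 j1 j2 j3]) (crossR A e).
Proof.
apply: (iffP idP).
  case/existsP=> i1; case/existsP=> i2; case/existsP=> i3.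
  case/existsP=> j1; case/existsP=> j2; case/existsP=> j3 /and4P[*].
  by exists i1, i2, i3, j1, j2, j3.
case=> i1 [i2 [i3 [j1 [j2 [j3 [*]]]]]].
apply/existsP; exists i1; apply/existsP; exists i2; apply/existsP; exists i3.
apply/existsP; exists j1; apply/existsP; exists j2; apply/existsP; exists j3.
by apply/and4P.
Qed.

Lemma ordc_lt e i1 i2 i3 j1 j2 j3 : ordc e i1 i2 i3 j1 j2 j3 ->
  [/\ i1 < j1, i2 < j2 & i3 < j3].
Proof. by case: e; case/and5P => *; split; lia. Qed.

Lemma crossR_ext (A B : {set T}) e :
  (forall i j : 'I_n, i < j -> ((i, j) \in A) = ((i, j) \in B)) ->
  crossR A e = crossR B e.
Proof.
move=> H; apply/crossRP/crossRP; case=> i1 [i2 [i3 [j1 [j2 [j3 [h1 h2 h3 o]]]]]];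
have [l1 l2 l3] := ordc_lt o; exists i1, i2, i3, j1, j2, j3; split => //;
by rewrite ?H // -?H.
Qed.

Definition injR (A : {set T}) :=
  [forall x in A, forall y in A, (x.1 == y.1) == (x.2 == y.2)].
Definition validS (A : {set T}) := [forall x in A, x.1 < x.2] && injR A.
Definition validW (A : {set T}) := [forall x in A, x.1 <= x.2] && injR A.

Lemma injR_fst (A : {set T}) a b c : injR A -> (a, b) \in A -> (a, c) \in A -> b = c.
Proof.
move=> /forall_inP H h1 h2; have /forall_inP := H _ h1 => /(_ _ h2) /=.
by rewrite eqxx => /eqP/esym/eqP.
Qed.

Lemma injR_snd (A : {set T}) a b c : injR A -> (a, c) \in A -> (b, c) \in A -> a = b.
Proof.
move=> /forall_inP H h1 h2; have /forall_inP := H _ h1 => /(_ _ h2) /=.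
by rewrite eqxx => /eqP/eqP.
Qed.

Lemma validS_lt (A : {set T}) a b : validS A -> (a, b) \in A -> a < b.
Proof. by case/andP => /forall_inP H _ /H. Qed.

Lemma validW_le (A : {set T}) a b : validW A -> (a, b) \in A -> a <= b.
Proof. by case/andP => /forall_inP H _ /H. Qed.

Definition arcs (P : {set {set 'I_n}}) : {set T} := [set x : T | Defs.arc P x.1 x.2].

Lemma arcsE P i j : ((i, j) \in arcs P) = Defs.arc P i j.
Proof. by rewrite inE. Qed.

Lemma has3E P : has_3crossing P = crossR (arcs P) false.
Proof. by rewrite /has_3crossing /crossR; do 6 (apply: eq_existsb => ?); rewrite !inE. Qed.

Lemma hasE3E P : has_enh_3crossing P = crossR (arcs P) true.
Proof. by rewrite /has_enh_3crossing /crossR; do 6 (apply: eq_existsb => ?); rewrite !inE. Qed.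

End Gen.

Section Part.
Variable n : nat.
Notation T := ('I_n * 'I_n)%type.
Implicit Types (P : {set {set 'I_n}}).

Lemma arcE P i j : partition P [set: 'I_n] ->
  Defs.arc P i j = [&& i < j, j \in pblock P i &
                     [forall l in pblock P i, ~~ ((i < l) && (l < j))]].
Proof.
case/and3P => /eqP Hcov tiP _.
have iP : i \in cover P by rewrite Hcov inE.
apply/idP/idP.
  case/andP => ij /existsP [B /andP[PB /and3P[iB jB H]]].
  by rewrite (def_pblock tiP PB iB) ij jB.
case/and3P => ij jB H; rewrite /Defs.arc ij /=; apply/existsP; exists (pblock P i).
by rewrite pblock_mem // mem_pblock iP jB.
Qed.

Lemma arc_fun P i j j' : partition P [set: 'I_n] ->
  Defs.arc P i j -> Defs.arc P i j' -> j = j'.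
Proof.
move=> HP; rewrite !arcE // => /and3P[ij jB /forall_inP H] /and3P[ij' jB' /forall_inP H'].
apply/val_inj/eqP; rewrite eqn_leq; apply/andP; split; rewrite leqNgt; apply/negP => lt.
  by have := H _ jB'; rewrite ij' lt.
by have := H' _ jB; rewrite ij lt.
Qed.

Lemma arc_inj P i i' j : partition P [set: 'I_n] ->
  Defs.arc P i j -> Defs.arc P i' j -> i = i'.
Proof.
move=> HP; have [/eqP Hcov tiP _] := and3P HP.
rewrite !arcE // => /and3P[ij jB /forall_inP H] /and3P[ij' jB' /forall_inP H'].
have E : pblock P i = pblock P i' by rewrite -(same_pblock tiP jB) (same_pblock tiP jB').
have iB' : i \in pblock P i' by rewrite -E mem_pblock Hcov inE.
have i'B : i' \in pblock P i by rewrite E mem_pblock Hcov inE.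
apply/val_inj/eqP; rewrite eqn_leq; apply/andP; split; rewrite leqNgt; apply/negP => lt.
  by have := H' _ iB'; rewrite ij lt.
by have := H _ i'B; rewrite ij' lt.
Qed.

Lemma arcs_valid P : partition P [set: 'I_n] -> validS (arcs P).
Proof.
move=> HP; apply/andP; split.
  by apply/forall_inP => [[i j]]; rewrite arcsE /= => /andP[].
apply/forall_inP => [[i j]]; rewrite arcsE => a1.
apply/forall_inP => [[i' j']]; rewrite arcsE => a2 /=.
case: (eqVneq i i') => [ii'|ii'].
  by subst; rewrite (arc_fun HP a1 a2) eqxx.
case: (eqVneq j j') => [jj'|//].
by subst; rewrite (arc_inj HP a1 a2) eqxx in ii'.
Qed.

Definition eR (A : {set T}) : rel 'I_n := fun i j => ((i, j) \in A) || ((j, i) \in A).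
Definition fR (A : {set T}) : rel 'I_n := fun i j => (i, j) \in A.

Lemma eR_sym A : symmetric (eR A).
Proof. by move=> i j; rewrite /eR orbC. Qed.

Lemma eqi_conn A : {in [set: 'I_n] & &, equivalence_rel (connect (eR A))}.
Proof.
move=> x y z _ _ _; split; first exact: connect0.
move=> cxy; apply/idP/idP => H; last exact: connect_trans cxy H.
apply: connect_trans H; by rewrite (sym_connect_sym (eR_sym A)).
Qed.

Definition Pof (A : {set T}) := equivalence_partition (connect (eR A)) [set: 'I_n].

Lemma Pof_part A : partition (Pof A) [set: 'I_n].
Proof. exact: equivalence_partitionP (eqi_conn A). Qed.

Lemma Pof_pblock A x y : (y \in pblock (Pof A) x) = connect (eR A) x y.
Proof. exact: (pblock_equivalence_partition (eqi_conn A)). Qed.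

Lemma pblock_conn P x y : partition P [set: 'I_n] ->
  (y \in pblock P x) = connect (eR (arcs P)) x y.
Proof.
move=> HP; have [/eqP Hcov tiP _] := and3P HP.
have memP z : z \in pblock P z by rewrite mem_pblock Hcov inE.
apply/idP/idP; last first.
  have: forall x y, connect (eR (arcs P)) x y -> pblock P y = pblock P x.
    move=> {}x {}y /connectP [p Hp ->].
    elim: p x Hp => [|z p IH] x //= /andP[exz Hp].
    rewrite (IH z Hp); case/orP: exz; rewrite arcsE /=.
      by rewrite arcE // => /and3P[_ zB _]; rewrite (same_pblock tiP zB).
    by rewrite arcE // => /and3P[_ xB _]; rewrite (same_pblock tiP xB).
  by move=> H /H <-.
have main : forall d (x y : 'I_n), y - x < d -> x <= y -> y \in pblock P x ->
    connect (eR (arcs P)) x y.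
  elim => // d IH {}x {}y hd xy yB.
  case: (ltngtP x y) => [ltxy|gt|eq]; last first.
  - by rewrite (val_inj eq) connect0.
  - by move: xy; rewrite leqNgt gt.
  case: (@arg_minnP _ y (fun z => (z \in pblock P x) && (x < z)) val); first by rewrite yB ltxy.
  move=> l /andP[lB xl] lmin.
  have al : Defs.arc P x l.
    rewrite arcE // xl lB /=; apply/forall_inP => z zB; apply/negP => /andP[xz zl].
    by have := lmin z; rewrite zB xz => /(_ isT); rewrite leqNgt zl.
  have ly : l <= y by apply: lmin; rewrite yB ltxy.
  apply: connect_trans (connect1 _) (IH l y _ _ _) => //.
  - by rewrite /eR arcsE al.
  - lia.
  - by rewrite (same_pblock tiP lB).
move=> yB; case: (leqP x y) => xy; first exact: (main (y - x).+1).
have xB : x \in pblock P y by rewrite (same_pblock tiP yB).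
rewrite (sym_connect_sym (eR_sym _)); apply: (main (x - y).+1) => //; exact: ltnW.
Qed.

Lemma Pof_arcs P : partition P [set: 'I_n] -> Pof (arcs P) = P.
Proof.
move=> HP; rewrite -{2}(equivalence_partition_pblock HP) /Pof /equivalence_partition.
apply: eq_imset => x; apply/setP => y; by rewrite !inE pblock_conn.
Qed.

Section Valid.
Variable A : {set T}.
Hypothesis HA : validS A.

Lemma fwd_le x y : connect (fR A) x y -> x <= y.
Proof.
case/connectP => p Hp ->; elim: p x Hp => //= z p IH x /andP[xz Hp].
apply: leq_trans (IH _ Hp); exact: ltnW (validS_lt HA xz).
Qed.

Lemma fwd_first x y : connect (fR A) x y -> x != y ->
  exists2 w, (x, w) \in A & connect (fR A) w y.
Proof.
case/connectP => [[|w p]] /=; first by move=> _ ->; rewrite eqxx.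
case/andP => xw Hp -> _; exists w => //; apply/connectP; by exists p.
Qed.

Lemma fwd_last x y : connect (fR A) x y -> x != y ->
  exists2 w, connect (fR A) x w & (w, y) \in A.
Proof.
case/connectP => p; case/lastP: p => [|p w] /=; first by move=> _ ->; rewrite eqxx.
rewrite rcons_path last_rcons => /andP[Hp wy] -> _; exists (last x p) => //.
apply/connectP; by exists p.
Qed.

Lemma conn_fwd x y : connect (eR A) x y ->
  connect (fR A) x y || connect (fR A) y x.
Proof.
have injA := andP HA; case: injA => _ injA.
have step : forall z w, connect (fR A) x z || connect (fR A) z x -> eR A z w ->
    connect (fR A) x w || connect (fR A) w x.
  move=> z w /orP[xz|zx] /orP[zw|wz].
  - by apply/orP; left; apply: connect_trans xz (connect1 _).
  - case: (eqVneq x z) => [exz|nxz]; first by rewrite exz; apply/orP; right; apply: connect1.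
    case: (fwd_last xz nxz) => w' xw' w'z.
    by rewrite (injR_snd injA wz w'z) xw'.
  - case: (eqVneq z x) => [ezx|nzx]; first by rewrite -ezx; apply/orP; left; apply: connect1.
    case: (fwd_first zx nzx) => w' zw' w'x.
    by rewrite (injR_fst injA zw zw') w'x orbT.
  - by apply/orP; right; apply: connect_trans (connect1 _) zx.
case/connectP => p Hp ->.
suff: forall p z, path (eR A) z p -> connect (fR A) x z || connect (fR A) z x ->
   connect (fR A) x (last z p) || connect (fR A) (last z p) x.
  by apply => //; rewrite connect0.
elim => //= w q IH z /andP[zw Hq] cz; apply: IH Hq _; exact: step cz zw.
Qed.

Lemma arcs_Pof : arcs (Pof A) = A.
Proof.
have injA := andP HA; case: injA => _ injA.
apply/setP => [[i j]]; rewrite arcsE arcE ?Pof_part // Pof_pblock.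
apply/idP/idP.
  case/and3P => ij cij /forall_inP H.
  have fij : connect (fR A) i j.
    case/orP: (conn_fwd cij) => // ji; have := fwd_le ji; by rewrite leqNgt ij.
  have nij : i != j by apply: contraTneq ij => ->; rewrite ltnn.
  case: (fwd_first fij nij) => w iw wj.
  have wlej := fwd_le wj; have iw' := validS_lt HA iw.
  case: (ltngtP w j) => [wlt|gt|weq].
  - have := H w; rewrite Pof_pblock iw' wlt /= => /(_ (connect1 _)); rewrite /eR iw.
    by move/(_ isT).
  - by move: wlej; rewrite leqNgt gt.
  - by rewrite -(val_inj weq).
move=> ij; have lt := validS_lt HA ij; rewrite lt /=; apply/andP; split.
  by apply: connect1; rewrite /eR ij.
apply/forall_inP => l; rewrite Pof_pblock => cil; apply/negP => /andP[il lj].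
case/orP: (conn_fwd cil) => [fil|fli]; last by have := fwd_le fli; lia.
have nil : i != l by apply: contraTneq il => ->; rewrite ltnn.
case: (fwd_first fil nil) => w iw wl.
have := fwd_le wl; rewrite -(injR_fst injA ij iw); lia.
Qed.

End Valid.

Lemma count_part e :
  #|[set P : {set {set 'I_n}} | is_set_partition P && ~~ crossR (arcs P) e]| =
  #|[set A : {set T} | validS A && ~~ crossR A e]|.
Proof.
set D := [set P | _].
have inj : {in D &, injective (@arcs n)}.
  move=> P P'; rewrite !inE => /andP[HP _] /andP[HP' _] E.
  by rewrite -(Pof_arcs HP) E Pof_arcs.
rewrite -(card_in_imset inj); apply: eq_card => A; apply/imsetP/idP.
  by case=> P; rewrite inE => /andP[HP nc] ->; rewrite inE arcs_valid.
rewrite inE => /andP[HA nc]; exists (Pof A); last by rewrite arcs_Pof.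
by rewrite inE /is_set_partition Pof_part arcs_Pof.
Qed.

End Part.

Section Shift.
Variable n : nat.

Definition up (y : 'I_n * 'I_n) : 'I_n.+1 * 'I_n.+1 :=
  (widen_ord (leqnSn n) y.1, lift ord0 y.2).

Lemma weq (a b : 'I_n) : (widen_ord (leqnSn n) a == widen_ord (leqnSn n) b) = (a == b).
Proof. by apply/eqP/eqP => [/(congr1 val) /= /val_inj|->]. Qed.

Lemma leq_eq (a b : 'I_n) : (lift ord0 a == lift ord0 b :> 'I_n.+1) = (a == b).
Proof. exact: (inj_eq lift_inj). Qed.

Lemma up_inj : injective up.
Proof.
move=> [a b] [c d]; rewrite /up /= => -[E1 E2]; congr pair.
  exact/val_inj.
apply/val_inj; move: E2 => /=; lia.
Qed.

Lemma upP (W : {set 'I_n * 'I_n}) (a b : 'I_n.+1) : (a, b) \in up @: W ->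
  exists2 y, y \in W & (val a = y.1 /\ val b = (y.2).+1).
Proof. by case/imsetP => y yW [-> ->]; exists y. Qed.

Lemma up_cross (W : {set 'I_n * 'I_n}) : crossR (up @: W) false = crossR W true.
Proof.
apply/crossRP/crossRP.
  case=> a1 [a2 [a3 [b1 [b2 [b3 [h1 h2 h3 o]]]]]].
  case/upP: h1 => y1 y1W [e1 f1]; case/upP: h2 => y2 y2W [e2 f2].
  case/upP: h3 => y3 y3W [e3 f3].
  exists y1.1, y2.1, y3.1, y1.2, y2.2, y3.2; split; rewrite -?surjective_pairing //.
  move: o; rewrite /ordc e1 e2 e3 f1 f2 f3 => /and5P[*]; apply/and5P; split; lia.
case=> i1 [i2 [i3 [j1 [j2 [j3 [h1 h2 h3 o]]]]]].
exists (widen_ord (leqnSn n) i1), (widen_ord (leqnSn n) i2), (widen_ord (leqnSn n) i3).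
exists (lift ord0 j1), (lift ord0 j2), (lift ord0 j3); split.
- exact: (imset_f up h1).
- exact: (imset_f up h2).
- exact: (imset_f up h3).
move: o; rewrite /ordc !lift0 => /and5P[*]; apply/and5P; split => /=; lia.
Qed.

Lemma count_shift :
  #|[set A : {set 'I_n.+1 * 'I_n.+1} | validS A && ~~ crossR A false]| =
  #|[set W : {set 'I_n * 'I_n} | validW W && ~~ crossR W true]|.
Proof.
set D := [set W : {set 'I_n * 'I_n} | _].
have inj : injective (fun W : {set 'I_n * 'I_n} => up @: W).
  move=> W W' E; apply/setP => y.
  by rewrite -(mem_imset W y up_inj) /= E (mem_imset W' y up_inj).
rewrite -(card_imset D inj); apply: eq_card => A; apply/idP/imsetP.
  rewrite inE => /andP[HA nc].
  set W := [set y | up y \in A].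
  have AW : A = up @: W.
    apply/setP => [[a b]]; apply/idP/idP; last first.
      by case/imsetP => y; rewrite inE => yA ->.
    move=> ab; have lt := validS_lt HA ab.
    have an : a < n by have := ltn_ord b; lia.
    have bn : b.-1 < n by have := ltn_ord b; lia.
    have E : up (Ordinal an, Ordinal bn) = (a, b).
      rewrite /up; congr pair; apply/val_inj => //=; rewrite /bump leq0n add1n; lia.
    by rewrite -E; apply: imset_f; rewrite inE E.
  exists W; last exact: AW.
  rewrite inE -up_cross -AW nc andbT; apply/andP; split.
    apply/forall_inP => y; rewrite inE => yA; have := validS_lt HA yA.
    by rewrite /= ?lift0.
  apply/forall_inP => x; rewrite inE => xA; apply/forall_inP => y; rewrite inE => yA.
  have /andP[_ /forall_inP H] := HA; have /forall_inP := H _ xA => /(_ _ yA).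
  by rewrite /= weq leq_eq.
case=> W; rewrite /D !inE => /andP[HW nc] ->.
rewrite up_cross nc andbT; apply/andP; split.
  apply/forall_inP => x /imsetP[[a b] yW ->]; have := validW_le HW yW.
  by rewrite /= ?lift0.
apply/forall_inP => x /imsetP[y yW ->]; apply/forall_inP => z /imsetP[w wW ->].
rewrite /= weq leq_eq.
have /andP[_ /forall_inP H] := HW; have /forall_inP := H _ yW => /(_ _ wW).
by [].
Qed.

End Shift.

Definition suppR k (W : {set 'I_k * 'I_k}) : {set 'I_k} :=
  [set i | [exists j, ((i, j) \in W) || ((j, i) \in W)]].

Section Relab.
Variable n : nat.
Variable S : {set 'I_n}.

Definition phi (a : 'I_#|S|) : 'I_n := enum_val a.

Lemma enum_sorted : sorted (fun x y : 'I_n => x < y) (enum S).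
Proof.
have H : sorted (fun x y : 'I_n => x < y) (enum 'I_n).
  by have := iota_ltn_sorted 0 n; rewrite -val_enum_ord sorted_map.
rewrite enumT in H; rewrite /enum_mem; apply: sorted_filter => //.
move=> x y z; exact: ltn_trans.
Qed.

Lemma phi_lt (a b : 'I_#|S|) : a < b -> phi a < phi b.
Proof.
move=> ab; rewrite /phi (enum_val_nth (enum_val a) a) (enum_val_nth (enum_val a) b).
apply: (sorted_ltn_nth _ _ enum_sorted) => //; last by rewrite inE -cardE.
  by move=> x y z; exact: ltn_trans.
by rewrite inE -cardE.
Qed.

Lemma phi_ltE (a b : 'I_#|S|) : (phi a < phi b) = (a < b).
Proof.
case: (ltngtP a b) => [ab|ba|eab]; first by rewrite phi_lt.
  by apply/negbTE; rewrite -leqNgt ltnW // phi_lt.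
by rewrite (val_inj eab) ltnn.
Qed.

Lemma phi_leE (a b : 'I_#|S|) : (phi a <= phi b) = (a <= b).
Proof. by rewrite leqNgt phi_ltE -leqNgt. Qed.

Lemma phi_inj : injective phi.
Proof. exact: enum_val_inj. Qed.

Lemma phi_S a : phi a \in S.
Proof. exact: enum_valP. Qed.

Lemma phi_surj i : i \in S -> exists a, phi a = i.
Proof. by move=> iS; exists (enum_rank_in iS i); rewrite /phi enum_rankK_in. Qed.

Definition f2 (x : 'I_#|S| * 'I_#|S|) : 'I_n * 'I_n := (phi x.1, phi x.2).
Definition dg (a : 'I_#|S|) : 'I_n * 'I_n := (phi a, phi a).

Lemma f2_inj : injective f2.
Proof.
by move=> [a b] [c d]; rewrite /f2 /= => -[/phi_inj -> /phi_inj ->].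
Qed.

Lemma memf2 (A : {set 'I_#|S| * 'I_#|S|}) a b :
  ((phi a, phi b) \in f2 @: A) = ((a, b) \in A).
Proof. exact: (mem_imset A (a, b) f2_inj). Qed.

Definition emb (A : {set 'I_#|S| * 'I_#|S|}) : {set 'I_n * 'I_n} :=
  f2 @: A :|: dg @: (~: suppR A).

Definition prj (W : {set 'I_n * 'I_n}) : {set 'I_#|S| * 'I_#|S|} :=
  [set x | ((phi x.1, phi x.2) \in W) && (x.1 < x.2)].

Lemma emb_lt (A : {set 'I_#|S| * 'I_#|S|}) (i j : 'I_n) : i < j -> ((i, j) \in emb A) = ((i, j) \in f2 @: A).
Proof.
move=> ij; rewrite /emb in_setU orb_idr // => /imsetP[a _ [ei ej]].
by rewrite ei ej ltnn in ij.
Qed.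

Lemma f2_cross (A : {set 'I_#|S| * 'I_#|S|}) e : crossR (f2 @: A) e = crossR A e.
Proof.
apply/crossRP/crossRP.
  case=> i1 [i2 [i3 [j1 [j2 [j3 [h1 h2 h3 o]]]]]].
  move: h1 => /imsetP[[a1 b1] h1 [e1 f1]].
  move: h2 => /imsetP[[a2 b2] h2 [e2 f2]].
  move: h3 => /imsetP[[a3 b3] h3 [e3 f3]].
  exists a1, a2, a3, b1, b2, b3; split => //.
  by move: o; rewrite e1 e2 e3 f1 f2 f3 /ordc !phi_ltE ?phi_leE.
case=> a1 [a2 [a3 [b1 [b2 [b3 [h1 h2 h3 o]]]]]].
exists (phi a1), (phi a2), (phi a3), (phi b1), (phi b2), (phi b3); split; rewrite ?memf2 //.
by rewrite /ordc !phi_ltE ?phi_leE.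
Qed.

Lemma emb_cross (A : {set 'I_#|S| * 'I_#|S|}) : crossR (emb A) true = crossR A true.
Proof. by rewrite -(f2_cross A true); apply: crossR_ext => i j ij; exact: emb_lt. Qed.

Lemma prj_emb (A : {set 'I_#|S| * 'I_#|S|}) : validS A -> prj (emb A) = A.
Proof.
move=> HA; apply/setP => [[a b]]; rewrite inE /=.
case: (ltnP a b) => ab; first by rewrite andbT emb_lt ?phi_ltE // memf2.
rewrite andbF; apply/esym/negP => /(validS_lt HA); by rewrite ltnNge ab.
Qed.

Lemma supp_fst k (A : {set 'I_k * 'I_k}) a b : (a, b) \in A -> a \in suppR A.
Proof. by move=> ab; rewrite inE; apply/existsP; exists b; rewrite ab. Qed.

Lemma supp_snd k (A : {set 'I_k * 'I_k}) a b : (a, b) \in A -> b \in suppR A.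
Proof. by move=> ab; rewrite inE; apply/existsP; exists a; rewrite ab orbT. Qed.

Lemma emb_valid (A : {set 'I_#|S| * 'I_#|S|}) : validS A -> validW (emb A).
Proof.
move=> HA; have /andP[_ /forall_inP H] := HA.
apply/andP; split.
  apply/forall_inP => x; rewrite in_setU => /orP[/imsetP[[a b] ab ->]|/imsetP[a _ ->]] //=.
  by rewrite phi_leE; exact: ltnW (validS_lt HA ab).
apply/forall_inP => x xE; apply/forall_inP => y yE.
move: xE yE; rewrite !in_setU.
case/orP => [/imsetP[[a b] ab ->]|/imsetP[c cS ->]];
case/orP => [/imsetP[[a' b'] ab' ->]|/imsetP[c' cS' ->]] /=;
rewrite ?(inj_eq phi_inj).
- by have /forall_inP := H _ ab => /(_ _ ab').
- move: cS'; rewrite inE => cS'.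
  case: (eqVneq a c') => [ac|_]; first by rewrite -ac (supp_fst ab) in cS'.
  by case: (eqVneq b c') => // bc; rewrite -bc (supp_snd ab) in cS'.
- move: cS; rewrite inE => cS.
  case: (eqVneq c a') => [ac|_]; first by rewrite ac (supp_fst ab') in cS.
  by case: (eqVneq c b') => // bc; rewrite bc (supp_snd ab') in cS.
- by rewrite eqxx.
Qed.

Lemma emb_supp (A : {set 'I_#|S| * 'I_#|S|}) : suppR (emb A) = S.
Proof.
apply/setP => i; rewrite inE /emb; apply/existsP/idP.
  case=> j /orP[]; rewrite in_setU => /orP[/imsetP[[a b] _ [ei ej]]|/imsetP[a _ [ei ej]]];
  by rewrite ?ei ?ej phi_S.
move=> iS; case: (phi_surj iS) => a <-; case: (boolP (a \in suppR A)) => [|na].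
  rewrite inE => /existsP[b /orP[ab|ba]]; exists (phi b).
    by rewrite in_setU memf2 ab.
  by rewrite !in_setU !memf2 ba !orbT.
exists (phi a); rewrite in_setU; apply/orP; left; apply/orP; right.
by rewrite -[(phi a, phi a)]/(dg a); apply: imset_f; rewrite inE.
Qed.

Section Fib.
Variable W : {set 'I_n * 'I_n}.
Hypothesis HW : validW W.
Hypothesis sW : suppR W = S.

Lemma W_S i j : (i, j) \in W -> (i \in S) && (j \in S).
Proof. by move=> ij; rewrite -sW (supp_fst ij) (supp_snd ij). Qed.

Lemma prj_valid : validS (prj W).
Proof.
have /andP[_ /forall_inP H] := HW.
apply/andP; split; first by apply/forall_inP => x; rewrite inE => /andP[].
apply/forall_inP => [[a b]]; rewrite inE /= => /andP[ab _].
apply/forall_inP => [[c d]]; rewrite inE /= => /andP[cd _].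
have /forall_inP := H _ ab => /(_ _ cd) /=.
by rewrite !(inj_eq phi_inj).
Qed.

Lemma emb_prj : emb (prj W) = W.
Proof.
have injW : injR W by case/andP: HW.
apply/setP => [[i j]]; apply/idP/idP.
  rewrite /emb in_setU => /orP[/imsetP[[a b] + [-> ->]]|/imsetP[a + [-> ->]]].
    by rewrite inE /= => /andP[].
  rewrite inE => na.
  have : phi a \in suppR W by rewrite sW phi_S.
  rewrite inE => /existsP[k /orP[aj|ja]].
    have /andP[_ jS] := W_S aj; case: (phi_surj jS) => b eb; subst k.
    case: (ltngtP a b) => [ab|ba|eab].
    - by move: na; rewrite (@supp_fst _ (prj W) a b) // inE /= aj ab.
    - by have := validW_le HW aj; rewrite phi_leE leqNgt ba.
    - by rewrite -(val_inj eab) in aj.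
  have /andP[jS _] := W_S ja; case: (phi_surj jS) => b eb; subst k.
  case: (ltngtP a b) => [ab|ba|eab].
  - by have := validW_le HW ja; rewrite phi_leE leqNgt ab.
  - by move: na; rewrite (@supp_snd _ (prj W) b a) // inE /= ja ba.
  - by rewrite -(val_inj eab) in ja.
move=> ijW; have /andP[iS jS] := W_S ijW.
case: (phi_surj iS) => a ea; case: (phi_surj jS) => b eb; subst i j.
rewrite /emb in_setU.
case: (ltngtP a b) => [ab|ba|eab].
- by rewrite memf2 inE /= ijW ab.
- by have := validW_le HW ijW; rewrite phi_leE leqNgt ba.
- move: ijW; rewrite -(val_inj eab) => aa; apply/orP; right.
  rewrite -[(phi a, phi a)]/(dg a); apply: imset_f; rewrite inE.
  apply/negP; rewrite inE => /existsP[c /orP[]]; rewrite inE /= => /andP[ac lt].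
  + by have := injR_fst injW aa ac => /phi_inj ec; rewrite ec ltnn in lt.
  + by have := injR_snd injW ac aa => /phi_inj ec; rewrite ec ltnn in lt.
Qed.

End Fib.

Lemma count_fib :
  #|[set W : {set 'I_n * 'I_n} | [&& validW W, ~~ crossR W true & suppR W == S]]| =
  #|[set A : {set 'I_#|S| * 'I_#|S|} | validS A && ~~ crossR A true]|.
Proof.
set D := [set A : {set 'I_#|S| * 'I_#|S|} | _].
have inj : {in D &, injective emb}.
  move=> A B; rewrite !inE => /andP[HA _] /andP[HB _] E.
  by rewrite -(prj_emb HA) E prj_emb.
rewrite -(card_in_imset inj); apply: eq_card => W; apply/idP/imsetP.
  rewrite inE => /and3P[HW nc /eqP sW]; exists (prj W); last by rewrite emb_prj.
  by rewrite inE prj_valid // -emb_cross emb_prj // nc.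
case=> A; rewrite /D inE => /andP[HA nc] ->.
by rewrite inE emb_valid // emb_cross nc emb_supp eqxx.
Qed.

End Relab.

Definition Ecount k := #|[set A : {set 'I_k * 'I_k} | validS A && ~~ crossR A true]|.

Lemma count_sum n :
  #|[set W : {set 'I_n * 'I_n} | validW W && ~~ crossR W true]| =
  \sum_(S : {set 'I_n}) Ecount #|S|.
Proof.
rewrite -sum1_card (partition_big (@suppR n) predT) //=.
apply: eq_bigr => S _; rewrite /Ecount -(count_fib S) -sum1_card.
by apply: eq_bigl => W; rewrite !inE andbA.
Qed.

Lemma sum_card n (g : nat -> nat) :
  \sum_(S : {set 'I_n}) g #|S| = \sum_(i < n.+1) 'C(n, i) * g i.
Proof.
rewrite (partition_big (fun S : {set 'I_n} => (inord #|S| : 'I_n.+1)) predT) //=.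
apply: eq_bigr => i _.
have cS (S : {set 'I_n}) : #|S| < n.+1 by rewrite ltnS; have := max_card S; rewrite card_ord.
rewrite (eq_bigr (fun _ => g i)); last by move=> S /eqP <-; rewrite inordK.
rewrite (eq_bigl (fun S => S \in [set S : {set 'I_n} | #|S| == i])); last first.
  by move=> S; rewrite !inE -val_eqE /= inordK.
by rewrite sum_nat_const card_draws card_ord.
Qed.

Theorem mainTheorem2 (n : nat) :
  C3 n.+1 = \sum_(i < n.+1) 'C(n, i) * E3 i.
Proof.
have e1 : C3 n.+1 = #|[set P : {set {set 'I_n.+1}} | is_set_partition P && ~~ crossR (arcs P) false]|.
  by apply: eq_card => P; rewrite !inE has3E.
rewrite e1 count_part count_shift count_sum (@sum_card n Ecount).
apply: eq_bigr => i _; congr (_ * _).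
rewrite /E3 /Ecount -count_part; apply: eq_card => P; by rewrite !inE hasE3E.
Qed.
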